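(* Let $f:(0,\infty)\to(0,\infty)$ be continuous, let $F(x)=\int_x^1\frac{du}{f(u)}$ for $x>0$, and suppose $\lim_{x\to0^+}F(x)=+\infty$, so that the inverse $F^{-1}$ of the strictly decreasing function $F$ is defined on $[0,\infty)$ and $F^{-1}(t)\to0$ as $t\to\infty$. If $f\circ F^{-1}\in\mathrm{RV}_\infty(-1)$, then $F^{-1}\in\mathrm{RV}_\infty(0)$.
   Context: $\mathrm{RV}_\infty(\alpha)$: the class of measurable functions $h$, positive for large arguments, with $\lim_{t\to\infty}h(\lambda t)/h(t)=\lambda^\alpha$ for every $\lambda>0$. *)

(* Defs.v *)
From Stdlib Require Import Reals.
Open Scope R_scope.

Definition lim_infty (g : R -> R) (l : R) : Prop :=
  forall eps, 0 < eps -> exists M, forall t, M < t -> Rabs (g t - l) < eps.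

Definition RV_infty (alpha : R) (h : R -> R) : Prop :=
  (exists x0, forall x, x0 < x -> 0 < h x) /\
  (forall lam, 0 < lam ->
     lim_infty (fun t => h (lam * t) / h t) (Rpower lam alpha)).

(* Main.v *)
Require Import Defs.
From Stdlib Require Import Reals Lra Classical ClassicalEpsilon.
Open Scope R_scope.

Fixpoint psum (g : nat -> R) (m : nat) : R :=
  match m with O => 0 | S k => psum g k + g k end.

Lemma baire_interval (P : nat -> R -> Prop)
 (cover : forall u, 1 <= u <= 2 -> exists n, P n u)
 (opn : forall n u, 1 <= u <= 2 -> ~ P n u ->
        exists d, 0 < d /\ forall v, Rabs (v - u) < d -> ~ P n v) :
 exists n a b, (1 <= a /\ a < b /\ b <= 2) /\ forall u, a <= u <= b -> P n u.
Proof.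
 apply NNPP; intro Hno.
 assert (H: forall n a b, 1 <= a /\ a < b /\ b <= 2 -> exists a' b',
    (a <= a' /\ a' < b' /\ b' <= b) /\ forall v, a' <= v <= b' -> ~ P n v).
 { intros n a b Hab.
   assert (Hu: exists u, a <= u <= b /\ ~ P n u).
   { apply NNPP; intro K; apply Hno; exists n, a, b; repeat split; try lra.
     intros u Hu. apply NNPP; intro K2; apply K; exists u; auto. }
   destruct Hu as [u [Hu Hnu]].
   destruct (opn n u ltac:(lra) Hnu) as [d [Hd Hv]].
   exists (Rmax a (u - d/2)), (Rmin b (u + d/2)).
   split. { unfold Rmax, Rmin; repeat destruct Rle_dec; lra. }
   intros v Hv'. apply Hv. unfold Rmax, Rmin in Hv';
   repeat destruct Rle_dec in Hv'; apply Rabs_def1; lra. }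
 assert (Hs: forall n (p : R*R), {q : R*R | 1 <= fst p /\ fst p < snd p /\ snd p <= 2 ->
     ((fst p <= fst q /\ fst q < snd q /\ snd q <= snd p) /\ forall v, fst q <= v <= snd q -> ~ P n v)}).
 { intros n p. apply constructive_indefinite_description.
   destruct (classic (1 <= fst p /\ fst p < snd p /\ snd p <= 2)) as [Hp|Hp].
   - destruct (H n _ _ Hp) as [a' [b' Hab]]. exists (a', b'); auto.
   - exists p; intro; contradiction. }
 pose (I := fix I (n:nat) : R*R := match n with O => (1,2) | S k => proj1_sig (Hs k (I k)) end).
 assert (HI0: I O = (1,2)) by reflexivity.
 assert (HIS: forall k, I (S k) = proj1_sig (Hs k (I k))) by reflexivity.
 assert (Inv: forall n, 1 <= fst (I n) /\ fst (I n) < snd (I n) /\ snd (I n) <= 2).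
 { induction n. rewrite HI0; simpl; lra.
   rewrite HIS. destruct (proj2_sig (Hs n (I n)) IHn) as [A _]. lra. }
 assert (Nest: forall n, fst (I n) <= fst (I (S n)) /\ snd (I (S n)) <= snd (I n)
            /\ forall v, fst (I (S n)) <= v <= snd (I (S n)) -> ~ P n v).
 { intro n. rewrite HIS. destruct (proj2_sig (Hs n (I n)) (Inv n)) as [A B]. 
   repeat split; try lra. exact B. }
 assert (Mono: forall n m, (n <= m)%nat -> fst (I n) <= fst (I m) /\ snd (I m) <= snd (I n)).
 { intros n m Hnm. induction Hnm. lra.
   destruct (Nest m) as [A [B _]]. lra. }
 assert (Cross: forall k n, fst (I k) <= snd (I n)).
 { intros k n. destruct (Mono k (max k n) (Nat.le_max_l _ _)).
   destruct (Mono n (max k n) (Nat.le_max_r _ _)). specialize (Inv (max k n)). lra. }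
 destruct (completeness (fun x => exists k, x = fst (I k))) as [c [Hub Hlub]].
 { exists 2. intros x [k ->]. specialize (Inv k). lra. }
 { exists (fst (I O)). eauto. }
 assert (Hc1: forall k, fst (I k) <= c) by (intro k; apply Hub; eauto).
 assert (Hc2: forall n, c <= snd (I n)).
 { intro n. apply Hlub. intros x [k ->]. apply Cross. }
 destruct (cover c) as [n Hn].
 { specialize (Hc1 O); specialize (Hc2 O); rewrite HI0 in *; simpl in *; lra. }
 destruct (Nest n) as [_ [_ Hav]]. apply (Hav c); auto.
Qed.

Theorem mainTheorem8
  (f F Finv : R -> R)
  (f_pos : forall x, 0 < x -> 0 < f x)
  (f_cont : forall x, 0 < x -> continuity_pt f x)
  (F_def : forall x (pr : Riemann_integrable (fun u => / f u) x 1),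
             0 < x -> F x = RiemannInt pr)
  (F_lim0 : forall M, exists d, 0 < d /\ forall x, 0 < x < d -> M < F x)
  (Finv_inv : forall t, 0 <= t -> 0 < Finv t /\ F (Finv t) = t)
  (hRV : RV_infty (-1) (fun t => f (Finv t))) :
  RV_infty 0 Finv.
Proof.
 assert (C: forall x, 0 < x -> continuity_pt (fun u => / f u) x).
 { intros x Hx. apply (continuity_pt_inv f x (f_cont x Hx)).
   specialize (f_pos x Hx); lra. }
 assert (Hint: forall p q, 0 < p -> 0 < q -> Riemann_integrable (fun u => / f u) p q).
 { intros p q Hp Hq. destruct (Rle_dec p q).
   - apply continuity_implies_RiemannInt; auto; intros; apply C; lra.
   - apply RiemannInt_P1, continuity_implies_RiemannInt; [lra|intros; apply C; lra]. }
 assert (Fdiff: forall x y (Hx:0<x) (Hy:0<y), F x - F y = RiemannInt (Hint x y Hx Hy)).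
 { intros. rewrite (F_def x (Hint x 1 Hx Rlt_0_1) Hx), (F_def y (Hint y 1 Hy Rlt_0_1) Hy).
   rewrite <- (RiemannInt_P26 (Hint x y Hx Hy) (Hint y 1 Hy Rlt_0_1) (Hint x 1 Hx Rlt_0_1)).
   ring. }
 assert (Fub: forall x y m, 0 < x -> x <= y -> 0 < m ->
           (forall z, x <= z <= y -> m <= f z) -> F x - F y <= (y - x) / m).
 { intros x y m Hx Hxy Hm Hz. rewrite (Fdiff x y Hx ltac:(lra)).
   apply Rle_trans with (RiemannInt (RiemannInt_P14 x y (/m))).
   apply RiemannInt_P19; auto.
   intros z Hz'. unfold fct_cte. apply Rinv_le_contravar; [lra|]. apply Hz; lra.
   rewrite RiemannInt_P15. unfold Rdiv; lra. }
 assert (Flb: forall x y M, 0 < x -> x <= y ->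
           (forall z, x <= z <= y -> f z <= M) -> (y - x) / M <= F x - F y).
 { intros x y M Hx Hxy Hz. assert (HM: 0 < M) by (specialize (Hz x ltac:(lra)); specialize (f_pos x Hx); lra).
   rewrite (Fdiff x y Hx ltac:(lra)).
   apply Rle_trans with (RiemannInt (RiemannInt_P14 x y (/M))).
   rewrite RiemannInt_P15. unfold Rdiv; lra.
   apply RiemannInt_P19; auto.
   intros z Hz'. unfold fct_cte. apply Rinv_le_contravar; [apply f_pos; lra|]. apply Hz; lra. }
 assert (Fstr: forall x y, 0 < x -> x < y -> F y < F x).
 { intros x y Hx Hxy.
   destruct (continuity_ab_maj f x y ltac:(lra) (fun c Hc => f_cont c ltac:(lra))) as [Mx [HM HMx]].
   pose proof (Flb x y (f Mx) Hx ltac:(lra) HM).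
   assert (0 < (y - x) / f Mx) by (apply Rdiv_lt_0_compat; [lra| apply f_pos; lra]). lra. }
 assert (Fdec: forall x y, 0 < x -> x <= y -> F y <= F x).
 { intros x y Hx Hxy. destruct (Req_dec x y). subst; lra. left; apply Fstr; lra. }
 assert (Gpos: forall t, 0 <= t -> 0 < Finv t) by (intros; apply Finv_inv; auto).
 assert (GF: forall t, 0 <= t -> F (Finv t) = t) by (intros; apply Finv_inv; auto).
 assert (Gdec: forall s t, 0 <= s -> s <= t -> Finv t <= Finv s).
 { intros s t Hs Hst. destruct (Rle_dec (Finv t) (Finv s)) as [|Hn]; auto.
   exfalso. pose proof (Fstr (Finv s) (Finv t) (Gpos s Hs) ltac:(lra)).
   rewrite !GF in H; lra. }
 assert (GFi: forall x, 0 < x -> 0 <= F x -> Finv (F x) = x).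
 { intros x Hx HF. pose proof (GF _ HF). pose proof (Gpos _ HF).
   destruct (Rtotal_order (Finv (F x)) x) as [h|[h|h]]; auto.
   - pose proof (Fstr _ _ H0 h); lra.
   - pose proof (Fstr _ _ Hx h); lra. }
 assert (Gcont: forall t0, 0 < t0 -> forall e, 0 < e -> exists d, 0 < d /\
            forall t, Rabs (t - t0) < d -> Rabs (Finv t - Finv t0) < e).
 { intros t0 Ht0 e He. set (x0 := Finv t0). assert (Hx0: 0 < x0) by (apply Gpos; lra).
   set (ee := Rmin e x0 / 2).
   assert (Hee: 0 < ee /\ ee <= e /2 /\ ee <= x0/2) by (unfold ee, Rmin; destruct Rle_dec; lra).
   pose proof (Fstr (x0 - ee) x0 ltac:(lra) ltac:(lra)).
   pose proof (Fstr x0 (x0 + ee) ltac:(lra) ltac:(lra)).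
   assert (F x0 = t0) by (apply GF; lra).
   exists (Rmin (Rmin (F (x0 - ee) - t0) (t0 - F (x0 + ee))) t0). split.
   { unfold Rmin; repeat destruct Rle_dec; lra. }
   intros t Ht. assert (Hb: F (x0+ee) < t < F (x0 - ee) /\ 0 < t).
   { apply Rabs_def2 in Ht.
     pose proof (Rmin_l (Rmin (F (x0 - ee) - t0) (t0 - F (x0 + ee))) t0).
     pose proof (Rmin_r (Rmin (F (x0 - ee) - t0) (t0 - F (x0 + ee))) t0).
     pose proof (Rmin_l (F (x0 - ee) - t0) (t0 - F (x0 + ee))).
     pose proof (Rmin_r (F (x0 - ee) - t0) (t0 - F (x0 + ee))). lra. }
   assert (Finv t < x0 + ee).
   { destruct (Rlt_le_dec (Finv t) (x0+ee)); auto. pose proof (Fdec (x0+ee) (Finv t) ltac:(lra) r) as K.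
     rewrite GF in K; lra. }
   assert (x0 - ee < Finv t).
   { destruct (Rlt_le_dec (x0-ee) (Finv t)); auto. pose proof (Fdec (Finv t) (x0 - ee) ltac:(apply Gpos; lra) r) as K.
     rewrite GF in K; lra. }
   apply Rabs_def1; fold x0; lra. }
 assert (hcont: forall t0, 0 < t0 -> forall e, 0 < e -> exists d, 0 < d /\
            forall t, Rabs (t - t0) < d -> Rabs (f (Finv t) - f (Finv t0)) < e).
 { intros t0 Ht0 e He. pose proof (f_cont (Finv t0) ltac:(apply Gpos; lra)) as Hc.
   destruct (Hc e He) as [al [Hal Hal2]].
   destruct (Gcont t0 Ht0 al Hal) as [d [Hd Hd2]]. exists d; split; auto.
   intros t Ht. destruct (Req_dec (Finv t) (Finv t0)) as [E|E].
   - rewrite E. rewrite Rminus_diag, Rabs_R0; lra.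
   - apply (Hal2 (Finv t)). split. split; [exact I| auto]. apply Hd2; auto. }
 assert (hpos: forall t, 0 <= t -> 0 < f (Finv t)) by (intros; apply f_pos, Gpos; auto).
 destruct hRV as [_ hlim].
 assert (hrat: forall lam, 0 < lam -> forall e, 0 < e -> exists M, forall t, M < t ->
      Rabs (f (Finv (lam*t)) / f (Finv t) - / lam) < e).
 { intros lam Hl e He. destruct (hlim lam Hl e He) as [M HM]. exists M. intros t Ht.
   specialize (HM t Ht). assert (E: Rpower lam (-1) = / lam).
   { replace (-1) with (-(1)) by ring. rewrite Rpower_Ropp, (Rpower_1 lam Hl). reflexivity. }
   rewrite E in HM. exact HM. }
 assert (Blow: exists n a b, (1 <= a /\ a < b /\ b <= 2) /\ forall u, a <= u <= b ->
     forall s, INR n + 1 <= s -> f (Finv s) / 4 <= f (Finv (s * u))).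
 { apply baire_interval.
   - intros u Hu. destruct (hrat u ltac:(lra) (1/4) ltac:(lra)) as [M HM].
     destruct (INR_unbounded M) as [n Hn]. exists n. intros s Hs.
     assert (Hs0: 0 < s) by (pose proof (pos_INR n); lra).
     specialize (HM s ltac:(lra)). rewrite (Rmult_comm u s) in HM.
     apply Rabs_def2 in HM. assert (/2 <= /u) by (apply Rinv_le_contravar; lra).
     set (A := f (Finv (s*u))) in *. set (B := f (Finv s)) in *.
     assert (0 < B) by (apply hpos; lra).
     assert (A / B * B = A) by (field; lra). nra.
   - intros n u Hu Hnp. apply not_all_ex_not in Hnp. destruct Hnp as [s Hs].
     apply imply_to_and in Hs. destruct Hs as [Hs1 Hs2]. apply Rnot_le_lt in Hs2.
     assert (Hs0: 0 < s) by (pose proof (pos_INR n); lra).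
     destruct (hcont (s*u) ltac:(nra) (f (Finv s)/4 - f (Finv (s*u))) ltac:(lra)) as [d [Hd Hd2]].
     exists (d / s). split. apply Rdiv_lt_0_compat; lra.
     intros v Hv Hp. specialize (Hp s Hs1). specialize (Hd2 (s*v)).
     assert (Rabs (s*v - s*u) < d).
     { rewrite <- Rmult_minus_distr_l, Rabs_mult, (Rabs_pos_eq s) by lra.
       apply (Rmult_lt_compat_l s) in Hv; auto. replace (s * (d/s)) with d in Hv by (field; lra). exact Hv. }
     specialize (Hd2 H). apply Rabs_def2 in Hd2. lra. }
 assert (Bup: exists n a b, (1 <= a /\ a < b /\ b <= 2) /\ forall u, a <= u <= b ->
     forall s, INR n + 1 <= s -> f (Finv (s * u)) <= 2 * f (Finv s)).
 { apply baire_interval.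
   - intros u Hu. destruct (hrat u ltac:(lra) (1/4) ltac:(lra)) as [M HM].
     destruct (INR_unbounded M) as [n Hn]. exists n. intros s Hs.
     assert (Hs0: 0 < s) by (pose proof (pos_INR n); lra).
     specialize (HM s ltac:(lra)). rewrite (Rmult_comm u s) in HM.
     apply Rabs_def2 in HM. assert (/u <= /1) by (apply Rinv_le_contravar; lra).
     rewrite Rinv_1 in H.
     set (A := f (Finv (s*u))) in *. set (B := f (Finv s)) in *.
     assert (0 < B) by (apply hpos; lra).
     assert (A / B * B = A) by (field; lra). nra.
   - intros n u Hu Hnp. apply not_all_ex_not in Hnp. destruct Hnp as [s Hs].
     apply imply_to_and in Hs. destruct Hs as [Hs1 Hs2]. apply Rnot_le_lt in Hs2.
     assert (Hs0: 0 < s) by (pose proof (pos_INR n); lra).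
     destruct (hcont (s*u) ltac:(nra) (f (Finv (s*u)) - 2 * f (Finv s)) ltac:(lra)) as [d [Hd Hd2]].
     exists (d / s). split. apply Rdiv_lt_0_compat; lra.
     intros v Hv Hp. specialize (Hp s Hs1). specialize (Hd2 (s*v)).
     assert (Rabs (s*v - s*u) < d).
     { rewrite <- Rmult_minus_distr_l, Rabs_mult, (Rabs_pos_eq s) by lra.
       apply (Rmult_lt_compat_l s) in Hv; auto. replace (s * (d/s)) with d in Hv by (field; lra). exact Hv. }
     specialize (Hd2 H). apply Rabs_def2 in Hd2. lra. }
 destruct Blow as [n [a [b [[Ha1 [Hab Hb2]] HB]]]].
 destruct Bup as [n' [a' [b' [[Ha1' [Hab' Hb2']] HB']]]].
 assert (Dlow: forall s, INR n + 1 <= s ->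
     (b - a) * s * (f (Finv s) / 4) <= Finv (a*s) - Finv (b*s)).
 { intros s Hs. assert (Hs0: 0 < s) by (pose proof (pos_INR n); lra).
   set (m := f (Finv s)/4). assert (Hm: 0 < m) by (unfold m; pose proof (hpos s ltac:(lra)); lra).
   assert (Hx: 0 < Finv (b*s)) by (apply Gpos; nra).
   assert (Hxy: Finv (b*s) <= Finv (a*s)) by (apply Gdec; nra).
   pose proof (Fub (Finv (b*s)) (Finv (a*s)) m Hx Hxy Hm) as K.
   rewrite !GF in K by nra.
   assert (K2: b*s - a*s <= (Finv (a*s) - Finv (b*s)) / m).
   { apply K. intros z Hz.
     assert (Fz1: F z <= b*s). { rewrite <- (GF (b*s)) by nra. apply Fdec; lra. }
     assert (Fz2: a*s <= F z). { rewrite <- (GF (a*s)) by nra. apply Fdec; lra. }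
     rewrite <- (GFi z ltac:(lra) ltac:(nra)).
     replace (F z) with (s * (F z / s)) by (field; lra).
     unfold m. apply HB; auto.
     split.
     - apply (Rmult_le_reg_l s); auto. replace (s * (F z / s)) with (F z) by (field; lra). lra.
     - apply (Rmult_le_reg_l s); auto. replace (s * (F z / s)) with (F z) by (field; lra). lra. }
   apply (Rmult_le_compat_r m) in K2; [|lra].
   replace ((Finv (a*s) - Finv (b*s)) / m * m) with (Finv (a*s) - Finv (b*s)) in K2 by (field; lra).
   nra. }
 assert (Dup: forall s, INR n' + 1 <= s ->
     Finv (a'*s) - Finv (b'*s) <= 2*(b'-a') * s * f (Finv s)).
 { intros s Hs. assert (Hs0: 0 < s) by (pose proof (pos_INR n'); lra).
   set (M := 2 * f (Finv s)). assert (HM: 0 < M) by (unfold M; pose proof (hpos s ltac:(lra)); lra).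
   assert (Hx: 0 < Finv (b'*s)) by (apply Gpos; nra).
   assert (Hxy: Finv (b'*s) <= Finv (a'*s)) by (apply Gdec; nra).
   pose proof (Flb (Finv (b'*s)) (Finv (a'*s)) M Hx Hxy) as K.
   rewrite !GF in K by nra.
   assert (K2: (Finv (a'*s) - Finv (b'*s)) / M <= b'*s - a'*s).
   { apply K. intros z Hz.
     assert (Fz1: F z <= b'*s). { rewrite <- (GF (b'*s)) by nra. apply Fdec; lra. }
     assert (Fz2: a'*s <= F z). { rewrite <- (GF (a'*s)) by nra. apply Fdec; lra. }
     rewrite <- (GFi z ltac:(lra) ltac:(nra)).
     replace (F z) with (s * (F z / s)) by (field; lra).
     unfold M. apply HB'; auto.
     split.
     - apply (Rmult_le_reg_l s); auto. replace (s * (F z / s)) with (F z) by (field; lra). lra.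
     - apply (Rmult_le_reg_l s); auto. replace (s * (F z / s)) with (F z) by (field; lra). lra. }
   apply (Rmult_le_compat_r M) in K2; [|lra].
   replace ((Finv (a'*s) - Finv (b'*s)) / M * M) with (Finv (a'*s) - Finv (b'*s)) in K2 by (field; lra).
   unfold M in K2. nra. }
 assert (Ha'0: 0 < a') by lra.
 assert (Kup: exists T, 0 <= T /\ forall t, T < t ->
     Finv t - Finv (b'/a' * t) <= 4*(b'-a') * t * f (Finv t)).
 { destruct (hrat (/a') ltac:(apply Rinv_0_lt_compat; lra) a' Ha'0) as [M HM].
   exists (Rmax 0 (Rmax M (a' * (INR n' + 1)))). split; [apply Rmax_l|].
   intros t Ht.
   pose proof (Rmax_l 0 (Rmax M (a' * (INR n' + 1)))).
   pose proof (Rmax_r 0 (Rmax M (a' * (INR n' + 1)))).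
   pose proof (Rmax_l M (a' * (INR n' + 1))). pose proof (Rmax_r M (a' * (INR n' + 1))).
   assert (Ht0: 0 < t) by lra.
   specialize (HM t ltac:(lra)). rewrite Rinv_inv in HM. apply Rabs_def2 in HM.
   assert (Hs: INR n' + 1 <= /a' * t).
   { apply (Rmult_le_reg_l a'); auto. replace (a' * (/a' * t)) with t by (field; lra). lra. }
   pose proof (Dup (/a' * t) Hs) as D.
   replace (a' * (/a' * t)) with t in D by (field; lra).
   replace (b' * (/a' * t)) with (b'/a' * t) in D by (field; lra).
   set (A := f (Finv (/a' * t))) in *. set (B := f (Finv t)) in *.
   assert (0 < B) by (apply hpos; lra).
   assert (A / B * B = A) by (field; lra).
   assert (A <= 2 * a' * B) by nra.
   assert (Hk: 2 * (b' - a') * (/a' * t) * A <= 2 * (b' - a') * (/a' * t) * (2 * a' * B)).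
   { apply Rmult_le_compat_l; auto. apply Rmult_le_pos. lra.
     apply Rmult_le_pos; [left; apply Rinv_0_lt_compat|]; lra. }
   replace (2 * (b' - a') * (/a' * t) * (2 * a' * B)) with (4 * (b'-a') * t * B) in Hk by (field; lra).
   lra. }
 assert (Hb1: 1 < b) by lra.
 assert (Lsum: forall t, INR n + 1 <= t -> forall m,
    (b-a)/4 * psum (fun j => b^j * t * f (Finv (b^j * t))) m <= Finv t - Finv (b^m * t)).
 { intros t Ht m. assert (Ht0: 0 < t) by (pose proof (pos_INR n); lra).
   induction m.
   - simpl. rewrite Rmult_1_l. lra.
   - simpl psum. simpl pow.
     assert (Hbm: 1 <= b^m) by (apply pow_R1_Rle; lra).
     set (s := b^m * t) in *.
     assert (Hst: t <= s) by (unfold s; nra).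
     pose proof (Dlow s ltac:(lra)) as D.
     assert (Finv (a * s) <= Finv s) by (apply Gdec; nra).
     replace (b * b^m * t) with (b * s) by (unfold s; ring).
     lra. }
 assert (Lsum2: forall m, exists T, 0 <= T /\ forall t, T < t ->
    INR m * t * f (Finv t) / 2 <= psum (fun j => b^j * t * f (Finv (b^j * t))) m).
 { induction m.
   - exists 0. split; [lra|]. intros t Ht. simpl. lra.
   - destruct IHm as [T [HT HT2]].
     assert (Hbm: 1 <= b^m) by (apply pow_R1_Rle; lra).
     destruct (hrat (b^m) ltac:(lra) (/(2 * b^m)) ltac:(apply Rinv_0_lt_compat; lra)) as [M HM].
     exists (Rmax T (Rmax M 0)). split. { pose proof (Rmax_l T (Rmax M 0)). lra. }
     intros t Ht.
     pose proof (Rmax_l T (Rmax M 0)). pose proof (Rmax_r T (Rmax M 0)).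
     pose proof (Rmax_l M 0). pose proof (Rmax_r M 0).
     specialize (HT2 t ltac:(lra)). specialize (HM t ltac:(lra)).
     apply Rabs_def2 in HM.
     rewrite S_INR. simpl psum.
     set (A := f (Finv (b^m * t))) in *. set (B := f (Finv t)) in *.
     assert (0 < B) by (apply hpos; lra).
     assert (A / B * B = A) by (field; lra).
     assert (/ b^m - / (2 * b^m) = / (2 * b^m)) by (field; lra).
     assert (b^m * / (2 * b^m) = /2) by (field; lra).
     assert (Hr: b^m * (A / B) >= /2) by nra.
     assert (b^m * A >= B / 2) by nra.
     assert (0 < t) by lra.
     nra. }
 assert (Klow: forall m, exists T, 0 <= T /\ forall t, T < t ->
    (b-a)/4 * (INR m * t * f (Finv t) / 2) <= Finv t).
 { intro m. destruct (Lsum2 m) as [T [HT HT2]].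
   exists (Rmax T (INR n + 1)). split. { pose proof (Rmax_l T (INR n + 1)); lra. }
   intros t Ht. pose proof (Rmax_l T (INR n + 1)). pose proof (Rmax_r T (INR n + 1)).
   pose proof (pos_INR n).
   pose proof (Lsum t ltac:(lra) m). specialize (HT2 t ltac:(lra)).
   assert (Hbm: 1 <= b^m) by (apply pow_R1_Rle; lra).
   assert (0 < Finv (b^m * t)) by (apply Gpos; nra).
   assert ((b-a)/4 * (INR m * t * f (Finv t) / 2) <= (b-a)/4 * psum (fun j => b^j * t * f (Finv (b^j * t))) m).
   { apply Rmult_le_compat_l; lra. }
   lra. }
 set (mu := b'/a').
 assert (Hmu: 1 < mu).
 { unfold mu. apply (Rmult_lt_reg_l a'); auto. replace (a' * (b'/a')) with b' by (field; lra). lra. }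
 assert (Q1: forall e, 0 < e -> exists T, 0 <= T /\ forall t, T < t ->
     Finv t - Finv (mu * t) <= e * Finv t).
 { intros e He. destruct Kup as [T1 [HT1 HK1]].
   set (C1 := 4*(b'-a')). set (c := (b-a)/4).
   assert (Hc: 0 < c) by (unfold c; lra).
   destruct (INR_unbounded (2*C1/(c*e))) as [m Hm].
   destruct (Klow m) as [T2 [HT2 HK2]].
   exists (Rmax T1 T2). split. { pose proof (Rmax_l T1 T2); lra. }
   intros t Ht. pose proof (Rmax_l T1 T2). pose proof (Rmax_r T1 T2).
   specialize (HK1 t ltac:(lra)). specialize (HK2 t ltac:(lra)).
   assert (Hce: 0 < c * e) by nra.
   assert (E1: C1 <= e * c * INR m / 2).
   { apply (Rmult_lt_compat_l (c*e)) in Hm; auto.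
     replace (c * e * (2 * C1 / (c * e))) with (2*C1) in Hm by (field; lra). nra. }
   assert (Ht0: 0 < t) by lra.
   assert (HX: 0 < t * f (Finv t)) by (apply Rmult_lt_0_compat; auto; apply hpos; lra).
   fold C1 in HK1. fold c in HK2.
   assert (C1 * (t * f (Finv t)) <= e * c * INR m / 2 * (t * f (Finv t)))
     by (apply Rmult_le_compat_r; lra).
   assert (C1 * t * f (Finv t) = C1 * (t * f (Finv t))) by ring.
   assert (c * (INR m * t * f (Finv t) / 2) = c * INR m / 2 * (t * f (Finv t))) by (unfold Rdiv; ring).
   fold mu in HK1.
   assert (e * (c * (INR m * t * f (Finv t) / 2)) <= e * Finv t) by (apply Rmult_le_compat_l; lra).
   assert (e * c * INR m / 2 * (t * f (Finv t)) = e * (c * (INR m * t * f (Finv t) / 2))) by (unfold Rdiv; ring).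
   lra. }
 assert (Qp: forall p e, 0 < e -> exists T, 0 <= T /\ forall t, T < t ->
     Finv t - Finv (mu^p * t) <= e * Finv t).
 { induction p; intros e He.
   - exists 0. split; [lra|]. intros t Ht. simpl. rewrite Rmult_1_l.
     pose proof (Gpos t ltac:(lra)). nra.
   - destruct (Q1 (e/2) ltac:(lra)) as [T1 [HT1 HK1]].
     destruct (IHp (e/2) ltac:(lra)) as [T2 [HT2 HK2]].
     exists (Rmax T1 T2). split. { pose proof (Rmax_l T1 T2); lra. }
     intros t Ht. pose proof (Rmax_l T1 T2). pose proof (Rmax_r T1 T2).
     specialize (HK1 t ltac:(lra)). specialize (HK2 (mu * t) ltac:(nra)).
     simpl pow. replace (mu * mu^p * t) with (mu^p * (mu * t)) by ring.
     assert (Finv (mu * t) <= Finv t) by (apply Gdec; nra).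
     pose proof (Gpos (mu * t) ltac:(nra)). nra. }
 assert (Kall: forall lam, 1 < lam -> forall e, 0 < e -> exists T, 0 <= T /\
     forall t, T < t -> Finv t - Finv (lam * t) <= e * Finv t).
 { intros lam Hl e He.
   destruct (Pow_x_infinity mu ltac:(rewrite Rabs_pos_eq; lra) lam) as [p Hp].
   specialize (Hp p (le_n p)). rewrite Rabs_pos_eq in Hp by (apply pow_le; lra).
   destruct (Qp p e He) as [T [HT HK]]. exists T. split; auto.
   intros t Ht. specialize (HK t Ht).
   assert (Finv (mu^p * t) <= Finv (lam * t)) by (apply Gdec; nra). lra. }
 assert (Rc: forall A B e, 0 < B -> Rabs (A - B) <= e * B -> Rabs (A / B - 1) <= e).
 { intros A B e HB0 Hab0. replace (A / B - 1) with ((A - B) * / B) by (field; lra).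
   rewrite Rabs_mult, Rabs_inv, (Rabs_pos_eq B) by lra.
   apply (Rmult_le_compat_r (/B)) in Hab0; [|left; apply Rinv_0_lt_compat; lra].
   replace (e * B * / B) with e in Hab0 by (field; lra). exact Hab0. }
 split.
 { exists 0. intros x Hx. apply Gpos; lra. }
 intros lam Hl. rewrite (Rpower_O lam Hl). intros e He.
 destruct (Rtotal_order lam 1) as [Hl1|[Hl1|Hl1]].
 - set (e' := Rmin (e/4) (1/2)).
   assert (He': 0 < e' /\ e' <= e/4 /\ e' <= 1/2).
   { unfold e'. pose proof (Rmin_l (e/4) (1/2)); pose proof (Rmin_r (e/4) (1/2)).
     unfold Rmin; destruct Rle_dec; lra. }
   destruct (Kall (/lam) ltac:(rewrite <- Rinv_1; apply Rinv_lt_contravar; lra) e' ltac:(lra)) as [T [HT HK]].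
   exists (T / lam). intros t Ht.
   assert (Ht': T < lam * t).
   { apply (Rmult_lt_compat_l lam) in Ht; auto. replace (lam * (T/lam)) with T in Ht by (field; lra). exact Ht. }
   assert (Ht0: 0 < t) by (apply (Rmult_lt_reg_l lam); lra).
   specialize (HK (lam * t) Ht'). replace (/lam * (lam * t)) with t in HK by (field; lra).
   assert (HBt: 0 < Finv t) by (apply Gpos; lra).
   assert (Finv t <= Finv (lam * t)) by (apply Gdec; nra).
   apply Rle_lt_trans with (e/2); [|lra].
   apply Rc; auto. rewrite Rabs_pos_eq by lra. nra.
 - subst lam. exists 0. intros t Ht. rewrite Rmult_1_l.
   assert (0 < Finv t) by (apply Gpos; lra).
   replace (Finv t / Finv t - 1) with 0 by (field; lra). rewrite Rabs_R0; lra.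
 - destruct (Kall lam Hl1 (e/2) ltac:(lra)) as [T [HT HK]].
   exists T. intros t Ht. specialize (HK t Ht).
   assert (HBt: 0 < Finv t) by (apply Gpos; lra).
   assert (Finv (lam * t) <= Finv t) by (apply Gdec; nra).
   apply Rle_lt_trans with (e/2); [|lra].
   apply Rc; auto. rewrite Rabs_left1 by lra. lra.
Qed.
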